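(* Let $p$ be an odd prime. Let $N$ be a subgroup of $\mathrm{PGL}_2(\mathbb{F}_p)$ isomorphic to $C_2\times C_2$, so that there are three subgroups $C<N$ of index $2$. If $N\le\mathrm{PSL}_2(\mathbb{F}_p)$, then every such $C$ is contained in (the image of) a Cartan subgroup and $N$ in its normaliser, and each $C$ is split when $p\equiv1\pmod4$ and non-split when $p\equiv3\pmod4$. If $N\not\le\mathrm{PSL}_2(\mathbb{F}_p)$, then for $p\equiv1\pmod4$ one such subgroup $C$ is contained in a split Cartan subgroup while the other two are contained in non-split Cartan subgroups; while if $p\equiv3\pmod4$ then one $C$ is non-split and the other two are split.
   Context: A Cartan subgroup of $\mathrm{GL}_2(\mathbb{F}_p)$ is split (conjugate to the diagonal matrices) or non-split (conjugate to the image of $\mathbb{F}_{p^2}^*$ acting on $\mathbb{F}_{p^2}\cong\mathbb{F}_p^2$); Cartan subgroups of $\mathrm{PGL}_2(\mathbb{F}_p)$, their normalisers, and the terms split/non-split there refer to images of those in $\mathrm{GL}_2(\mathbb{F}_p)$. $\mathrm{PSL}_2(\mathbb{F}_p)$ is viewed as the index-$2$ subgroup of $\mathrm{PGL}_2(\mathbb{F}_p)$ of classes of matrices with square determinant. *)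

(* Defs.v *)
From HB Require Import structures.
From mathcomp Require Import all_boot all_order all_algebra all_fingroup all_solvable all_field.
Set Implicit Arguments. Unset Strict Implicit. Unset Printing Implicit Defensive.
Import GroupScope.

(* GL_2(F_p) is the finGroupType {'GL_2['F_p]} of invertible 2x2 matrices over 'F_p.
   Matrices act on row vectors on the right: v |-> v *m g. *)
Section PGL.
Variable p : nat.

Local Notation GL2 := {'GL_2['F_p]}.

Definition scalarGL : {set GL2} := [set g : GL2 | is_scalar_mx (GLval g)].

Definition PGL2 := coset_of scalarGL.

Definition projPGL (g : GL2) : PGL2 := coset scalarGL g.

Definition imPGL (A : {set GL2}) : {set PGL2} := projPGL @: A.

Definition PSL2 : {set PGL2} :=
  imPGL [set g : GL2 | [exists a : 'F_p, (\det (GLval g) == a ^+ 2)%R]].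

Definition diagGL : {set GL2} := [set g : GL2 | is_diag_mx (GLval g)].

Definition split_cartan (Ca : {set GL2}) : Prop :=
  exists h : GL2, Ca = diagGL :^ h.

(* Non-split Cartan subgroup of GL_2(F_p): the image of K^* acting by
   multiplication on K, for a field K with p^2 elements, transported to
   F_p^2 along some F_p-linear (= additive, since F_p is the prime field)
   bijection phi : K -> F_p^2.  Ranging over all phi gives all conjugates. *)
Definition nonsplit_cartan (Ca : {set GL2}) : Prop :=
  exists (K : finFieldType) (phi : K -> 'rV['F_p]_2),
    [/\ #|K| = (p ^ 2)%N,
        {morph phi : x y / (x + y)%R >-> (x + y)%R},
        bijective phi &
        Ca = [set g : GL2 | [exists x : K, (x != 0%R) &&
                [forall v : K, phi (x * v)%R == (phi v *m GLval g)%R]]]].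

Definition cartan (Ca : {set GL2}) : Prop := split_cartan Ca \/ nonsplit_cartan Ca.

End PGL.

(* Main.v *)
Require Import Defs.
From HB Require Import structures.
From mathcomp Require Import all_boot all_order all_algebra all_fingroup all_solvable all_field.
From mathcomp Require Import ring zify.
Set Implicit Arguments. Unset Strict Implicit. Unset Printing Implicit Defensive.
Import GroupScope GRing.Theory.
Section Euler.
Local Open Scope ring_scope.
Variable F : finFieldType.
Hypothesis oddF : odd #|F|.

Let n := #|F|.-1.
Let m := n./2.

Lemma unitF_pow (x : F) : x != 0 -> x ^+ n = 1.
Proof.
move=> nz; apply: (mulfI nz); rewrite mulr1 -exprS.
have -> : n.+1 = #|F| by rewrite /n prednK // (cardD1 0).
exact: expf_card.
Qed.

Lemma n_eq : n = (m * 2)%N.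
Proof.
rewrite /m /n; have h1 : (0 < #|F|)%N by rewrite (cardD1 0).
move: oddF; case: #|F| h1 => // k _ /= ek.
have ek' : odd k = false by apply/negbTE.
by rewrite -[k in LHS]odd_double_half ek' add0n -muln2.
Qed.

Lemma primF : exists z : F, n.-primitive_root z.
Proof.
pose rs := enum [pred x : F | x != 0].
have n_gt0 : (0 < n)%N.
  rewrite /n -subn1 subn_gt0 (cardD1 0) (cardD1 1) !inE oner_neq0 /=.
  by rewrite ltnS.
have /hasP[z _ pz] : has n.-primitive_root rs.
  apply: has_prim_root => //.
  - apply/allP => x; rewrite mem_enum inE => nz.
    by rewrite unity_rootE unitF_pow.
  - exact: enum_uniq.
  - by rewrite -cardE /n -(cardC1 0) leqnn.
by exists z.
Qed.

Lemma euler_crit (u : F) : u != 0 -> (exists y, u = y ^+ 2) <-> u ^+ m = 1.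
Proof.
move=> nz; split.
  case=> y uy; have ynz : y != 0 by apply: contra nz; rewrite uy => /eqP->; rewrite expr0n.
  by rewrite uy -exprM mulnC -n_eq unitF_pow.
move=> um; have [z pz] := primF.
have [[i /= _] ui] := prim_rootP pz (unitF_pow nz).
have : z ^+ (i * m)%N == z ^+ 0 by rewrite exprM -ui um expr0.
rewrite (eq_prim_root_expr pz) mod0n n_eq.
rewrite mulnC -muln_modr => /eqP/(f_equal (divn^~ m)).
have m_gt0 : (0 < m)%N.
  case: m n_eq => //; rewrite mul0n => e.
  by have := prim_order_gt0 pz; rewrite e.
rewrite mulKn // div0n => /eqP; rewrite -/(dvdn 2 i) => /dvdnP[k ik].
by exists (z ^+ k); rewrite ui ik -exprM mulnC.
Qed.

End Euler.
Section Mx2.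
Local Open Scope ring_scope.
Variable R : comRingType.

Definition mk2 (a b c d : R) : 'M[R]_2 :=
  \matrix_(i, j) if i == 0 then (if j == 0 then a else b) else (if j == 0 then c else d).

Lemma ord2 (i : 'I_2) : i = 0 \/ i = 1.
Proof. by case: i => [[|[|//]] Hi]; [left|right]; apply: val_inj. Qed.

Lemma mx2_eta (M : 'M[R]_2) : M = mk2 (M 0 0) (M 0 1) (M 1 0) (M 1 1).
Proof.
by apply/matrixP => i j; rewrite !mxE; case: (ord2 i) => ->; case: (ord2 j) => ->.
Qed.

Lemma mk2E a b c d : 
  [/\ mk2 a b c d 0 0 = a, mk2 a b c d 0 1 = b, mk2 a b c d 1 0 = c & mk2 a b c d 1 1 = d].
Proof. by rewrite !mxE /=. Qed.

Lemma mk2_inj a b c d a' b' c' d' : mk2 a b c d = mk2 a' b' c' d' ->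
  [/\ a = a', b = b', c = c' & d = d'].
Proof.
move=> e; have [e1 e2 e3 e4] := mk2E a b c d; have [f1 f2 f3 f4] := mk2E a' b' c' d'.
by split; [rewrite -e1 -f1 e|rewrite -e2 -f2 e|rewrite -e3 -f3 e|rewrite -e4 -f4 e].
Qed.

Lemma mk2_mul a b c d a' b' c' d' : mk2 a b c d *m mk2 a' b' c' d' =
  mk2 (a * a' + b * c') (a * b' + b * d') (c * a' + d * c') (c * b' + d * d').
Proof.
apply/matrixP => i j; rewrite !mxE !big_ord_recl big_ord0 !mxE /=.
by case: (ord2 i) => ->; case: (ord2 j) => -> /=; rewrite addr0.
Qed.

Lemma mk2_add a b c d a' b' c' d' : mk2 a b c d + mk2 a' b' c' d' =
  mk2 (a + a') (b + b') (c + c') (d + d').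
Proof.
by apply/matrixP => i j; rewrite !mxE; case: (ord2 i) => ->; case: (ord2 j) => ->.
Qed.

Lemma mk2_scale k a b c d : k *: mk2 a b c d = mk2 (k * a) (k * b) (k * c) (k * d).
Proof.
by apply/matrixP => i j; rewrite !mxE; case: (ord2 i) => ->; case: (ord2 j) => ->.
Qed.

Lemma mk2_scalar k : k%:M = mk2 k 0 0 k :> 'M[R]_2.
Proof.
by apply/matrixP => i j; rewrite !mxE; case: (ord2 i) => ->; case: (ord2 j) => ->.
Qed.

Lemma mk2_det a b c d : \det (mk2 a b c d) = a * d - b * c.
Proof.
rewrite (expand_det_row _ 0) !big_ord_recl big_ord0 /cofactor !det_mx11 !mxE /=.
rewrite addr0 expr0 expr1 mul1r; congr (_ + _).
by rewrite mulN1r mulrN.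
Qed.

Lemma mk2_is_scalar a b c d :
  is_scalar_mx (mk2 a b c d) = [&& b == 0, c == 0 & a == d].
Proof.
apply/is_scalar_mxP/and3P => [[k] | [/eqP-> /eqP-> /eqP->]].
  by rewrite mk2_scalar => /mk2_inj[-> -> -> ->]; rewrite !eqxx.
by exists d; rewrite mk2_scalar.
Qed.

Lemma mk2_is_diag a b c d : is_diag_mx (mk2 a b c d) = (b == 0) && (c == 0).
Proof.
apply/is_diag_mxP/andP => [h | [/eqP eb /eqP ec] i j].
  by have := h 0 1 isT; have := h 1 0 isT; rewrite !mxE /= => -> ->; rewrite eqxx.
by rewrite !mxE; case: (ord2 i) => ->; case: (ord2 j) => ->.
Qed.

End Mx2.
Lemma normByConj (gT : finGroupType) (A : {set gT}) (x : gT) :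
  (forall z, z \in A -> z ^ x \in A) -> x \in 'N(A).
Proof.
move=> h; rewrite inE; apply/subsetP => y; rewrite mem_conjg => /h.
by rewrite conjgKV.
Qed.

Section PGLfacts.
Variable p : nat.
Local Notation GL2 := {'GL_2['F_p]}.
Local Notation F := 'F_p.

Lemma scalarGL_gs : group_set (scalarGL p).
Proof.
apply/group_setP; split; first by rewrite inE GL_1E scalar_mx_is_scalar.
move=> x y; rewrite !inE GL_MxE => /is_scalar_mxP[a ->] /is_scalar_mxP[b ->].
by rewrite mul_scalar_mx scale_scalar_mx scalar_mx_is_scalar.
Qed.

Canonical scalarGL_group := group scalarGL_gs.

Lemma scalarGL_norm (g : GL2) : g \in 'N(scalarGL p).
Proof.
apply: normByConj => z; rewrite !inE => /is_scalar_mxP[a za].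
rewrite conjgE !GL_MxE GL_VxE za -scalar_mxC mulmxA mulVmx ?GL_unitmx //.
by rewrite mul1mx scalar_mx_is_scalar.
Qed.

Lemma projPGL_mul (g h : GL2) : projPGL (g * h) = projPGL g * projPGL h.
Proof. by rewrite /projPGL morphM // scalarGL_norm. Qed.

Lemma projPGL_surj (x : PGL2 p) : exists g, x = projPGL g.
Proof. by have [g _ ->] := cosetP x; exists g. Qed.

Lemma projPGL1 (g : GL2) : (projPGL g == 1) = (g \in scalarGL p).
Proof.
apply/eqP/idP => [|h]; first by apply: coset_idr; apply: scalarGL_norm.
exact: coset_id.
Qed.

Lemma projPGL_eq (g h : GL2) : projPGL g = projPGL h ->
  exists k : F, GLval g = (k *: GLval h)%R.
Proof.
move=> e.
have : g * h^-1 \in scalarGL p.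
  by rewrite -projPGL1 projPGL_mul e -projPGL_mul mulgV; apply/eqP; apply: coset_id; rewrite group1.
rewrite inE GL_MxE GL_VxE => /is_scalar_mxP[k hk]; exists k.
by rewrite -mul_scalar_mx -hk -mulmxA mulVmx ?GL_unitmx // mulmx1.
Qed.

End PGLfacts.
Definition issqb (F : finFieldType) (u : F) := [exists y : F, u == (y ^+ 2)%R].

Section Squares.
Local Open Scope ring_scope.
Variable F : finFieldType.
Hypothesis oddF : odd #|F|.
Let m := (#|F|.-1)./2.

Lemma issqbE (u : F) : u != 0 -> issqb u = (u ^+ m == 1).
Proof.
move=> nz; have := euler_crit oddF nz; rewrite -/m => -[h1 h2].
apply/existsP/eqP => [[y /eqP uy]|um]; first by apply: h1; exists y.
by have [y uy] := h2 um; exists y; apply/eqP.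
Qed.

Lemma pm1 (u : F) : u != 0 -> (u ^+ m == 1) || (u ^+ m == -1).
Proof.
move=> nz; have := unitF_pow nz; rewrite (n_eq oddF) -/m exprM.
by move=> /eqP; rewrite -subr_eq0 subr_sqr_1 mulf_eq0 subr_eq0 addr_eq0.
Qed.

Lemma issqb_mul (u v : F) : (1 != -1 :> F) -> u != 0 -> v != 0 ->
  issqb (u * v) = (issqb u == issqb v).
Proof.
move=> h1 nu nv; rewrite !issqbE ?mulf_neq0 // exprMn.
have := pm1 nu; have := pm1 nv.
have h2 : (-1 == 1 :> F) = false by rewrite eq_sym (negbTE h1).
by case/orP => /eqP->; case/orP => /eqP->; rewrite ?mulr1 ?mulrN1 ?opprK ?eqxx ?h2 ?(negbTE h1).
Qed.

End Squares.

Section SquaresFp.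
Local Open Scope ring_scope.
Variable p : nat.
Hypothesis Hp : prime p.
Hypothesis Hodd : odd p.
Local Notation F := 'F_p.

Lemma oddFp : odd #|F|. Proof. by rewrite card_Fp. Qed.

Lemma Fp_one_neq (F' : nzRingType) : p \in [pchar F'] -> (1 != -1 :> F').
Proof.
move=> ch; rewrite -subr_eq0 opprK -[1 + 1]/(2%:R) -(dvdn_pcharf ch).
apply/negP => /(dvdn_leq (isT : (0 < 2)%N)); move=> h; have p2 : p = 2%N by move: (prime_gt1 Hp) h; lia.
by move: Hodd; rewrite p2.
Qed.

Lemma F_one_neq : (1 != -1 :> F).
Proof. exact: Fp_one_neq (pchar_Fp Hp). Qed.

Lemma issqb_neg1 : issqb (-1 : F) = (p %% 4 == 1)%N.
Proof.
rewrite issqbE ?oppr_eq0 ?oner_eq0 // card_Fp // -signr_odd -divn2.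
have h2 : (p %% 2 = 1)%N by rewrite modn2 Hodd.
have [h|h] : (p %% 4 = 1 \/ p %% 4 = 3)%N by lia.
  have -> : (p.-1 %/ 2 = (p %/ 4) * 2)%N by lia.
  by rewrite oddM andbF expr0 eqxx h.
have -> : (p.-1 %/ 2 = (p %/ 4) * 2 + 1)%N by lia.
by rewrite oddD oddM andbF expr1 h eq_sym (negbTE F_one_neq).
Qed.

End SquaresFp.
Section Cartan.
Variable p : nat.
Hypothesis Hp : prime p.
Hypothesis Hodd : odd p.
Local Notation GL2 := {'GL_2['F_p]}.
Local Notation F := 'F_p.
Local Open Scope ring_scope.

Lemma two_neq0 : (2 : F) != 0.
Proof.
have := F_one_neq Hp Hodd; apply: contra => /eqP h.
by rewrite -subr_eq0 opprK; apply/eqP.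
Qed.

Lemma PSL_iff (g : GL2) : (projPGL g \in PSL2 p) = issqb (\det (GLval g)).
Proof.
apply/imsetP/idP.
  case=> h; rewrite inE => /existsP[a /eqP ha] e.
  have [k hk] := projPGL_eq e.
  by apply/existsP; exists (k * a); rewrite hk detZ ha exprMn.
by move=> hsq; exists g => //; rewrite inE.
Qed.

Lemma inv_normal (x : PGL2 p) : (x ^+ 2 = 1)%g -> x != 1%g ->
  exists g : GL2, exists a b c : F, x = projPGL g /\ GLval g = mk2 a b c (-a).
Proof.
have [g ->] := projPGL_surj x => x2 x1.
have : (g * g)%g \in scalarGL p by rewrite -projPGL1 projPGL_mul; apply/eqP; move: x2; rewrite expgS expg1.
have : g \notin scalarGL p by rewrite -projPGL1.
rewrite !inE GL_MxE (mx2_eta (GLval g)) mk2_mul !mk2_is_scalar.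
set a := GLval g 0 0; set b := GLval g 0 1; set c := GLval g 1 0; set d := GLval g 1 1.
move=> nsc /and3P[/eqP e1 /eqP e2 /eqP e3].
have ed : d = - a.
  apply/eqP; rewrite -subr_eq0 opprK; apply/negP => /negP ad; rewrite addrC in ad.
  have eb : b = 0.
    have : b * (a + d) == 0 by rewrite mulrDr (mulrC b a) e1.
    by rewrite mulf_eq0 (negbTE ad) orbF => /eqP.
  have ec : c = 0.
    have : c * (a + d) == 0 by rewrite mulrDr (mulrC c d) e2.
    by rewrite mulf_eq0 (negbTE ad) orbF => /eqP.
  have : (a - d) * (a + d) == 0.
    apply/eqP; move: e3; rewrite eb ec mulr0 ?mul0r !addr0 => e3.
    have -> : (a - d) * (a + d) = a * a - d * d by ring.
    by rewrite e3 add0r subrr.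
  rewrite mulf_eq0 (negbTE ad) orbF subr_eq0 => /eqP ead.
  by move: nsc; rewrite eb ec ead !eqxx.
exists g, a, b, c; split => //; by rewrite (mx2_eta (GLval g)) -/a -/b -/c -/d ed.
Qed.

Definition span2 (M : 'M[F]_2) : {set GL2} :=
  [set h : GL2 | [exists u : F, exists v : F, GLval h == u%:M + v *: M]].

Lemma span2_gs (a b c : F) : group_set (span2 (mk2 a b c (-a))).
Proof.
apply/group_setP; split.
  by rewrite inE; apply/existsP; exists 1; apply/existsP; exists 0; rewrite scale0r addr0.
move=> x y; rewrite !inE => /existsP[u1 /existsP[v1 /eqP h1]] /existsP[u2 /existsP[v2 /eqP h2]].
apply/existsP; exists (u1 * u2 + v1 * v2 * (a ^+ 2 + b * c)).
apply/existsP; exists (u1 * v2 + v1 * u2).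
rewrite GL_MxE h1 h2 !mk2_scalar !mk2_scale !mk2_add mk2_mul.
by apply/eqP; congr mk2; ring.
Qed.

Lemma span2_g (g : GL2) : g \in span2 (GLval g).
Proof.
by rewrite inE; apply/existsP; exists 0; apply/existsP; exists 1; rewrite scale1r (raddf0 (@scalar_mx _ 2)) add0r.
Qed.

Lemma span2_norm (g k : GL2) (mu : F) : GLval (g ^ k)%g = mu *: GLval g ->
  k \in 'N(span2 (GLval g)).
Proof.
move=> hk; apply: normByConj => z; rewrite !inE => /existsP[u /existsP[v /eqP hz]].
apply/existsP; exists u; apply/existsP; exists (v * mu).
move: hk; rewrite !conjgE !GL_MxE !GL_VxE hz => hk.
rewrite mulmxDl mulmxDr -scalemxAl -scalemxAr hk scalerA.
by rewrite -scalar_mxC mulmxA mulVmx ?GL_unitmx // mul1mx.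
Qed.

Lemma commute_conj (g k : GL2) : commute (projPGL g) (projPGL k) ->
  exists mu : F, GLval (g ^ k)%g = mu *: GLval g.
Proof.
move=> cgk; apply: projPGL_eq.
rewrite /projPGL morphJ ?scalarGL_norm // conjgE; rewrite -/(projPGL g) -/(projPGL k) cgk mulKg. done.
Qed.

End Cartan.
Section Split.
Variable p : nat.
Hypothesis Hp : prime p.
Hypothesis Hodd : odd p.
Local Notation GL2 := {'GL_2['F_p]}.
Local Notation F := 'F_p.
Local Open Scope ring_scope.

Lemma conj_span (H M D : 'M[F]_2) u v : H \in unitmx -> H *m M = D *m H ->
  H *m (u%:M + v *: M) *m invmx H = u%:M + v *: D.
Proof.
move=> hu hM.
rewrite mulmxDr mulmxDl -scalemxAr -scalemxAl hM mulmxK // scalar_mxC mulmxK //.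
Qed.

Lemma diag_conj (H M X : 'M[F]_2) e1 e2 : H \in unitmx ->
  H *m M = mk2 e1 0 0 e2 *m H -> e1 != e2 ->
  (exists u v, X = u%:M + v *: M) <-> is_diag_mx (H *m X *m invmx H).
Proof.
move=> hu hM he; split.
  case=> u [v ->]; rewrite (conj_span _ _ hu hM) mk2_scalar mk2_scale mk2_add mk2_is_diag.
  by rewrite !mulr0 !addr0 eqxx.
set Y := H *m X *m invmx H => /is_diag_mxP hY.
have y01 : Y 0 1 = 0 by apply: hY.
have y10 : Y 1 0 = 0 by apply: hY.
have he' : e1 - e2 != 0 by rewrite subr_eq0.
pose v := (Y 0 0 - Y 1 1) / (e1 - e2); pose u := Y 0 0 - v * e1.
exists u, v.
have inj : forall Z1 Z2, H *m Z1 *m invmx H = H *m Z2 *m invmx H -> Z1 = Z2.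
  by move=> Z1 Z2 /(can_inj (mulmxKV hu)) /(can_inj (mulKmx hu)).
apply: inj; rewrite -/Y (conj_span _ _ hu hM) (mx2_eta Y) y01 y10.
rewrite mk2_scalar mk2_scale mk2_add /u /v; congr mk2; try field => //; ring.
Qed.

End Split.
Section Split2.
Variable p : nat.
Hypothesis Hp : prime p.
Hypothesis Hodd : odd p.
Local Notation GL2 := {'GL_2['F_p]}.
Local Notation F := 'F_p.
Local Open Scope ring_scope.

Lemma eigen_basis (a b c be : F) : be != 0 -> a ^+ 2 + b * c = be ^+ 2 ->
  exists H : 'M[F]_2, exists e1 e2 : F,
    [/\ H \in unitmx, H *m mk2 a b c (-a) = mk2 e1 0 0 e2 *m H & e1 != e2].
Proof.
move=> bnz hs; have t2 := two_neq0 Hp Hodd.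
have [c0|cnz] := eqVneq c 0.
  have anz : a != 0.
    apply: contra bnz => /eqP a0; move: hs; rewrite c0 a0 mulr0 addr0 expr0n /=.
    by move=> /esym/eqP; rewrite expf_eq0.
  exists (mk2 (a + a) b 0 1), a, (-a); split.
  - rewrite unitmxE mk2_det unitfE mulr1 mulr0 subr0.
    by rewrite -mulr2n -mulr_natr mulf_neq0.
  - by rewrite !mk2_mul c0; congr mk2; ring.
  - apply: contra anz => /eqP h; rewrite -[a](mulfK t2) (_ : a * 2 = a - - a); last by ring.
    by rewrite -h subrr mul0r.
exists (mk2 c (be - a) c (- be - a)), be, (- be); split.
- rewrite unitmxE mk2_det unitfE.
  have -> : c * (- be - a) - (be - a) * c = - (2 * be * c) by ring.
  by rewrite oppr_eq0 !mulf_neq0.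
- have eb : b = (be ^+ 2 - a ^+ 2) / c by rewrite -hs addrC addKr mulfK.
  by rewrite !mk2_mul eb; congr mk2; field.
- apply: contra bnz => /eqP h; rewrite -[be](mulfK t2) (_ : be * 2 = be - - be); last by ring.
  by rewrite -h subrr mul0r.
Qed.

Lemma span2_split (a b c be : F) : be != 0 -> a ^+ 2 + b * c = be ^+ 2 ->
  exists h : GL2, span2 (mk2 a b c (-a)) = diagGL p :^ h.
Proof.
move=> bnz hs; have [H [e1 [e2 [hu hM he]]]] := eigen_basis bnz hs.
pose h : GL2 := Sub H hu.
exists h; apply/setP => x; rewrite mem_conjg !inE conjgE invgK !GL_MxE GL_VxE /=.
rewrite mulmxA.
apply/idP/idP.
  case/existsP => u /existsP[v /eqP e]; apply: (proj1 (diag_conj (GLval x) hu hM he)); by exists u, v.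
move/(proj2 (diag_conj (GLval x) hu hM he)) => [u [v e]]; apply/existsP; exists u; apply/existsP; exists v.
by rewrite e.
Qed.

End Split2.
Lemma arith p : odd p -> ((p ^ 2).-1./2 = p.-1 * (p.+1./2))%N.
Proof.
move=> h; have h2 : (p %% 2 = 1)%N by rewrite modn2 h.
rewrite -!divn2 expnS expn1.
have [k ->] : exists k, p = (k * 2 + 1)%N by exists (p %/ 2); rewrite {1}(divn_eq p 2) h2.
have -> : ((k * 2 + 1) * (k * 2 + 1)).-1 = (((k * k + k) * 2) * 2)%N by rewrite -!subn1; nia.
have -> : ((k * 2 + 1).+1 = (k + 1) * 2)%N by lia.
rewrite !mulnK // addn1 /=; nia.
Qed.
Section NonSplit.
Variable p : nat.
Hypothesis Hp : prime p.
Hypothesis Hodd : odd p.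
Local Notation GL2 := {'GL_2['F_p]}.
Local Notation F := 'F_p.
Local Open Scope ring_scope.

Definition Kp : finFieldType := s2val (pPrimePowerField Hp (isT : (0 < 2)%N)).
Lemma pchar_Kp : p \in [pchar Kp].
Proof. exact: (s2valP (pPrimePowerField Hp (isT : (0 < 2)%N))). Qed.
Lemma card_Kp : #|Kp| = (p ^ 2)%N.
Proof. exact: (s2valP' (pPrimePowerField Hp (isT : (0 < 2)%N))). Qed.
Definition L : finFieldType := pPrimeCharType pchar_Kp.
Lemma card_L : #|L| = (p ^ 2)%N. Proof. exact: card_Kp. Qed.

Definition iota (t : F) : L := in_alg L t.
Lemma ioD x y : iota (x + y) = iota x + iota y. Proof. exact: rmorphD. Qed.
Lemma ioB x y : iota (x - y) = iota x - iota y. Proof. exact: rmorphB. Qed.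
Lemma ioN x : iota (- x) = - iota x. Proof. exact: rmorphN. Qed.
Lemma ioM x y : iota (x * y) = iota x * iota y. Proof. exact: rmorphM. Qed.
Lemma ioX x n : iota (x ^+ n) = iota x ^+ n. Proof. exact: rmorphXn. Qed.
Lemma ioV x : iota (x^-1) = (iota x)^-1. Proof. exact: fmorphV. Qed.
Lemma io0 : iota 0 = 0. Proof. exact: rmorph0. Qed.
Lemma io1 : iota 1 = 1. Proof. exact: rmorph1. Qed.
Lemma io_inj : injective iota. Proof. exact: fmorph_inj. Qed.
Lemma io_eq0 x : (iota x == 0) = (x == 0). Proof. exact: fmorph_eq0. Qed.
Definition ioE := (ioD, ioB, ioN, ioM, ioX, ioV, io0, io1).

Variables a b c : F.
Hypothesis hns : ~~ issqb (a ^+ 2 + b * c).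
Let s := a ^+ 2 + b * c.

Lemma s_neq0 : s != 0.
Proof. by apply: contra hns => /eqP s0; apply/existsP; exists 0; rewrite expr0n /=; apply/eqP. Qed.

Lemma b_neq0 : b != 0.
Proof.
by apply: contra hns => /eqP b0; apply/existsP; exists a; rewrite b0 mul0r addr0.
Qed.

Lemma exists_y : exists y : L, y ^+ 2 = iota s.
Proof.
have oddL : odd #|L| by rewrite card_L oddX orbC Hodd.
have snz : iota s != 0 by rewrite io_eq0 s_neq0.
have [_ h] := euler_crit oddL snz.
suff /h [y hy] : iota s ^+ (#|L|.-1)./2 = 1 by exists y.
rewrite card_L arith // exprM -ioX.
have -> : s ^+ p.-1 = 1.
  have := unitF_pow s_neq0; by rewrite card_Fp.
by rewrite io1 expr1n.
Qed.

Section Chi.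
Variable y : L.
Hypothesis hy : y ^+ 2 = iota s.
Let g := mk2 a b c (-a).

Definition chi (v : 'rV[F]_2) : L := iota (v 0 0) + iota (v 0 1) * ((y - iota a) / iota b).

Lemma ib_neq0 : iota b != 0. Proof. by rewrite io_eq0 b_neq0. Qed.

Lemma y_notin (u : F) : y != iota u.
Proof.
apply/negP => /eqP yu; move: hns; apply/negP/negPn/existsP; exists u.
by apply/eqP/io_inj; rewrite ioX -yu hy.
Qed.

Lemma chiB v w : chi (v - w) = chi v - chi w.
Proof. rewrite /chi !mxE !ioB. move: (iota (v 0 0)) (iota (w 0 0)) (iota (v 0 1)) (iota (w 0 1)) ((y - iota a) / iota b) => A B C D E. ring. Qed.

Lemma rowmul_entry (v : 'rV[F]_2) (M : 'M[F]_2) j :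
  (v *m M) 0 j = v 0 0 * M 0 j + v 0 1 * M 1 j.
Proof.
rewrite !mxE !big_ord_recl big_ord0 addr0.
have -> : lift ord0 (@ord0 0) = 1 :> 'I_2 by apply: val_inj.
done.
Qed.

Lemma chi_mul v (u t : F) : chi (v *m (u%:M + t *: g)) = (iota u + iota t * y) * chi v.
Proof.
rewrite /chi !rowmul_entry /g !mxE /= ?mulr1n ?mulr0n !ioE.
have ec : iota c = (y ^+ 2 - iota a ^+ 2) / iota b.
  by rewrite hy /s !ioE addrC addKr mulrAC divff ?mul1r // ib_neq0.
rewrite ec; field; exact: ib_neq0.
Qed.

Lemma chiD v w : chi (v + w) = chi v + chi w.
Proof. rewrite /chi !mxE !ioD; ring. Qed.

Lemma chi_inj : injective chi.
Proof.
move=> v w e.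
have h0 : chi (v - w) = 0 by rewrite chiB e subrr.
suff : v - w = 0 by move/eqP; rewrite subr_eq0 => /eqP.
move: h0; rewrite /chi; set d0 := (v - w) 0 0; set d1 := (v - w) 0 1 => h0.
have d1z : d1 = 0.
  apply/eqP; apply: contraT => nz.
  have inz : iota d1 != 0 by rewrite io_eq0.
  have : y = iota (a - d0 * b / d1).
    rewrite !ioE; apply/eqP; rewrite -subr_eq0.
    have -> : y - (iota a - iota d0 * iota b / iota d1) =
      (iota b / iota d1) * (iota d0 + iota d1 * ((y - iota a) / iota b)).
      by field; rewrite inz ib_neq0.
    by rewrite h0 mulr0.
  by move=> e'; move: (y_notin (a - d0 * b / d1)); rewrite -e' eqxx.
have d0z : d0 = 0.
  by move: h0; rewrite d1z io0 mul0r addr0 => /eqP; rewrite io_eq0 => /eqP.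
by apply/rowP => j; rewrite [RHS]mxE; case: (ord2 j) => ->.
Qed.

Lemma chi_bij : bijective chi.
Proof.
apply: (@inj_card_bij _ _ chi chi_inj).
by rewrite card_L card_mx card_Fp.
Qed.

Lemma L_decomp (z : L) : exists u t, z = iota u + iota t * y.
Proof.
have [phi chiK phiK] := chi_bij.
exists (phi z 0 0 - phi z 0 1 * a / b), (phi z 0 1 / b).
rewrite -{1}(phiK z) /chi !ioE; field; exact: ib_neq0.
Qed.

Lemma nonsplit_span2 : nonsplit_cartan (span2 (mk2 a b c (-a))).
Proof.
have [phi chiK phiK] := chi_bij.
exists L, phi; split.
- exact: card_L.
- by move=> x z; apply: chi_inj; rewrite phiK chiD !phiK.
- by exists chi.
apply/setP => h; rewrite !inE; apply/idP/idP.
  case/existsP => u /existsP[t /eqP eh].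
  apply/existsP; exists (iota u + iota t * y); apply/andP; split.
    apply/eqP => x0.
    have t0 : t = 0.
      apply/eqP; apply: contraT => tnz.
      have itnz : iota t != 0 by rewrite io_eq0.
      have : y = iota (- u / t).
        rewrite !ioE; apply/eqP; rewrite -subr_eq0.
        have -> : y - - iota u / iota t = (iota t)^-1 * (iota u + iota t * y).
          by field.
        by rewrite x0 mulr0.
      by move=> e'; move: (y_notin (- u / t)); rewrite -e' eqxx.
    have u0 : u = 0.
      by move: x0; rewrite t0 io0 mul0r addr0 => /eqP; rewrite io_eq0 => /eqP.
    have := GL_det h; rewrite eh u0 t0 scale0r addr0 (raddf0 (@scalar_mx _ 2)) det0.
    by rewrite eqxx.
  apply/forallP => z; apply/eqP; apply: chi_inj.
  by rewrite phiK eh chi_mul phiK.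
case/existsP => x /andP[_ /forallP hx].
have [u [t ex]] := L_decomp x.
apply/existsP; exists u; apply/existsP; exists t; apply/eqP.
apply/row_matrixP => i; rewrite !rowE.
have := eqP (hx (chi (delta_mx 0 i))); rewrite chiK => <-.
by apply: chi_inj; rewrite phiK chi_mul ex.
Qed.

End Chi.

Lemma nonsplit_cartan_span2 : nonsplit_cartan (span2 (mk2 a b c (-a))).
Proof. have [y hy] := exists_y; exact: (nonsplit_span2 hy). Qed.

End NonSplit.
Section Main.
Variable p : nat.
Hypothesis Hp : prime p.
Hypothesis Hodd : odd p.
Local Notation GL2 := {'GL_2['F_p]}.
Local Notation F := 'F_p.

Lemma imPGL_morphim (A : {set GL2}) : imPGL A = coset (scalarGL p) @* A.
Proof.
rewrite /imPGL morphimEsub //; apply/subsetP => z _; exact: scalarGL_norm.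
Qed.

Lemma PSL_mul (u v : PGL2 p) : (u * v \in PSL2 p) = ((u \in PSL2 p) == (v \in PSL2 p)).
Proof.
have [g ->] := projPGL_surj u; have [h ->] := projPGL_surj v.
rewrite -projPGL_mul !PSL_iff GL_MxE det_mulmx issqb_mul ?GL_det //.
  exact: (oddFp Hp Hodd).
exact: (F_one_neq Hp Hodd).
Qed.

Lemma PSL1 : (1 : PGL2 p) \in PSL2 p.
Proof.
have -> : (1 : PGL2 p) = projPGL 1 by rewrite /projPGL morph1.
by rewrite PSL_iff GL_1E det1; apply/existsP; exists 1%R; rewrite expr1n.
Qed.

Lemma inv_cartan (z : PGL2 p) : (z ^+ 2 = 1) -> z != 1 ->
  exists Ca : {group GL2},
   [/\ <[z]> \subset imPGL Ca,
       (issqb ((-1)%R : F) == (z \in PSL2 p)) -> split_cartan Ca,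
       (issqb ((-1)%R : F) != (z \in PSL2 p)) -> nonsplit_cartan Ca &
       forall k : GL2, commute z (projPGL k) -> k \in 'N(Ca)].
Proof.
move=> z2 z1; have [g [a [b [c [zg hg]]]]] := inv_normal z2 z1.
pose Ca := Group (span2_gs a b c).
have gCa : g \in Ca by rewrite /= -hg span2_g.
have hdet : (- \det (GLval g) = a ^+ 2 + b * c)%R.
  rewrite hg mk2_det; ring.
have detnz : (\det (GLval g) != 0)%R := GL_det g.
have hsq : issqb (- \det (GLval g))%R = (issqb ((-1)%R : F) == (z \in PSL2 p)).
  rewrite zg PSL_iff -mulN1r issqb_mul ?oppr_eq0 ?oner_eq0 //.
    exact: (oddFp Hp Hodd).
  exact: (F_one_neq Hp Hodd).
exists Ca; split.
- rewrite imPGL_morphim cycle_subG zg; apply: mem_morphim => //; exact: scalarGL_norm.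
- rewrite -hsq hdet => /existsP[be /eqP hbe].
  have bnz : be != 0%R.
    apply: contra detnz => /eqP b0; rewrite -oppr_eq0 hdet hbe b0 expr0n //.
  have [h hh] := span2_split Hp Hodd bnz hbe.
  by exists h.
- rewrite -hsq hdet => hns; exact: nonsplit_cartan_span2.
- move=> k czk; have [mu hmu] : exists mu : F, GLval (g ^ k) = (mu *: GLval g)%R.
    by apply: commute_conj; rewrite -zg.
  by have := span2_norm hmu; rewrite hg.
Qed.

End Main.
Lemma Z22_exp : exponent [set: 'Z_2 * 'Z_2] %| 2.
Proof.
apply/exponentP => -[i j] _.
by apply/eqP; case: i j => [[|[|//]] ?] [[|[|//]] ?].
Qed.

Lemma Z22_card : #|[set: 'Z_2 * 'Z_2]| = 4.
Proof. by rewrite cardsT card_prod card_ord. Qed.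

Section Klein.
Variable gT : finGroupType.
Variable N : {group gT}.
Hypothesis HN : N \isog [set: 'Z_2 * 'Z_2].

Lemma N_exp x : x \in N -> x ^+ 2 = 1.
Proof.
move=> xN; have : exponent N %| 2 by rewrite (exponent_isog HN) Z22_exp.
by move/exponentP; apply.
Qed.

Lemma N_card : #|N| = 4.
Proof. by rewrite (card_isog HN) Z22_card. Qed.

Lemma N_inv x : x \in N -> x^-1 = x.
Proof. by move=> xN; apply/eqP; rewrite eq_invg_mul -(N_exp xN) expgS expg1. Qed.

Lemma N_comm x y : x \in N -> y \in N -> commute x y.
Proof.
move=> xN yN; rewrite /commute -{1}(N_inv (groupM xN yN)) invMg.
by rewrite (N_inv xN) (N_inv yN).
Qed.

Lemma N_order2 z : z \in N -> z != 1 -> #[z] = 2.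
Proof.
move=> zN z1; have d : #[z] %| 2 by rewrite order_dvdn (N_exp zN).
have g1 : 1 < #[z] by rewrite order_gt1.
have := dvdn_leq (isT : 0 < 2) d; lia.
Qed.

Lemma N_gen2 (C : {group gT}) : C \subset N -> #|N : C| = 2 ->
  exists z, [/\ z \in N, z != 1 & C :=: <[z]>].
Proof.
move=> CN iC; have cC : #|C| = 2.
  have := Lagrange CN; rewrite iC N_card; lia.
have : C :!=: 1 by rewrite -cardG_gt1 cC.
case/trivgPn => z zC z1; have zN := subsetP CN z zC.
exists z; split => //; apply/eqP; rewrite eq_sym eqEcard cycle_subG zC /=.
by rewrite cC -orderE (N_order2 zN z1).
Qed.

Lemma N_index2 w : w \in N -> w != 1 -> #|N : <[w]>| = 2.
Proof.
move=> wN w1; have sub : <[w]> \subset N by rewrite cycle_subG.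
have := Lagrange sub; rewrite N_card -orderE (N_order2 wN w1) => h.
have h' : (2 * #|N : <[w]>| = 4)%N := h; lia.
Qed.

End Klein.
Unset Implicit Arguments.
Set Strict Implicit.

Theorem lemma2p7 (p : nat) (Hp : prime p) (Hodd : odd p)
    (N : {group PGL2 p}) (HN : N \isog [set: 'Z_2 * 'Z_2]) :
  (* Case N <= PSL_2(F_p) *)
  (N \subset PSL2 p ->
   forall C : {group PGL2 p}, C \subset N -> #|N : C| = 2%N ->
     exists Ca : {group {'GL_2['F_p]}},
       [/\ cartan Ca, C \subset imPGL Ca, N \subset imPGL 'N(Ca),
           (p %% 4 = 1)%N -> split_cartan Ca &
           (p %% 4 = 3)%N -> nonsplit_cartan Ca])
  /\
  (* Case N not <= PSL_2(F_p) *)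
  (~~ (N \subset PSL2 p) ->
   ((p %% 4 = 1)%N ->
     exists C0 : {group PGL2 p},
       [/\ C0 \subset N, #|N : C0| = 2%N,
           (exists Ca : {group {'GL_2['F_p]}}, split_cartan Ca /\ C0 \subset imPGL Ca) &
           forall C : {group PGL2 p}, C \subset N -> #|N : C| = 2%N -> C != C0 ->
             exists Ca : {group {'GL_2['F_p]}}, nonsplit_cartan Ca /\ C \subset imPGL Ca])
   /\
   ((p %% 4 = 3)%N ->
     exists C0 : {group PGL2 p},
       [/\ C0 \subset N, #|N : C0| = 2%N,
           (exists Ca : {group {'GL_2['F_p]}}, nonsplit_cartan Ca /\ C0 \subset imPGL Ca) &
           forall C : {group PGL2 p}, C \subset N -> #|N : C| = 2%N -> C != C0 ->
             exists Ca : {group {'GL_2['F_p]}}, split_cartan Ca /\ C \subset imPGL Ca])).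
Proof.
have hm1 := issqb_neg1 Hp Hodd.
split.
  move=> NPSL C CN iC.
  have [z [zN z1 Cz]] := N_gen2 HN CN iC.
  have [Ca [zCa hs hn hN]] := inv_cartan Hp Hodd (N_exp HN zN) z1.
  have zP : z \in PSL2 p := subsetP NPSL z zN.
  exists Ca; split.
  - by case: (boolP (issqb ((-1)%R : 'F_p) == (z \in PSL2 p))) => h; [left; exact: hs | right; exact: hn].
  - by rewrite Cz.
  - apply/subsetP => u uN; have [k ek] := projPGL_surj u.
    rewrite ek; apply: imset_f; apply: hN; rewrite -ek; exact (N_comm HN zN uN).
  - by move=> p1; apply: hs; rewrite zP hm1 p1.
  - by move=> p3; apply: hn; rewrite zP hm1 p3.
move=> nNPSL.
have [x xN xnP] := subsetPn nNPSL.
have x1 : x != 1 by apply: contra xnP => /eqP->; exact: PSL1.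
have : ~~ (N \subset [set 1; x]).
  apply/negP => /subset_leq_card; rewrite (N_card HN) cards2 eq_sym x1 //.
case/subsetPn => y yN; rewrite !inE negb_or => /andP[y1 yx].
have xyN : x * y \in N by rewrite groupM.
have klein : forall z, z \in N -> [|| z == 1, z == x, z == y | z == x * y].
  have e1x : (1 == x) = false by rewrite eq_sym (negbTE x1).
  have e1y : (1 == y) = false by rewrite eq_sym (negbTE y1).
  have e1xy : (1 == x * y) = false.
    by rewrite eq_sym -eq_invg_mul (N_inv HN xN) eq_sym (negbTE yx).
  have exy : (x == y) = false by rewrite eq_sym (negbTE yx).
  have exxy : (x == x * y) = false.
    by rewrite -{1}[x]mulg1 (inj_eq (mulgI x)) eq_sym (negbTE y1).
  have eyxy : (y == x * y) = false.
    by rewrite -{1}[y]mul1g (inj_eq (mulIg y)) eq_sym (negbTE x1).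
  have uS : uniq [:: 1; x; y; x * y] by rewrite /= !inE e1x e1y e1xy exy exxy eyxy.
  have sub : [:: 1; x; y; x * y] \subset N.
    by apply/subsetP => z; rewrite !inE => /or4P[] /eqP->; rewrite ?group1.
  have cS : #|[:: 1; x; y; x * y]| = #|N| by rewrite (card_uniqP uS) (N_card HN).
  have eS := subset_cardP cS sub.
  by move=> z; rewrite -eS !inE.
have xP : (x \in PSL2 p) = false by apply/negbTE.
pose w := if y \in PSL2 p then y else x * y.
have wN : w \in N by rewrite /w; case: ifP.
have w1 : w != 1.
  rewrite /w; case: ifP => // _.
  by rewrite -eq_invg_mul (N_inv HN xN) eq_sym.
have wP : w \in PSL2 p.
  by rewrite /w; case: ifP => // yP; rewrite PSL_mul // xP yP.
have others : forall z, z \in N -> z != 1 -> z != w -> z \notin PSL2 p.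
  move=> z zN z1 zw; have := klein z zN; rewrite (negbTE z1) /=.
  case/or3P => /eqP ez; rewrite ez; first by rewrite xP.
    by move: zw; rewrite ez /w; case: ifP => yP; rewrite ?eqxx // yP.
  move: zw; rewrite ez /w; case: ifP => yP; last by rewrite eqxx.
  by rewrite PSL_mul // xP yP.
have [Ca0 [wCa hs0 hn0 _]] := inv_cartan Hp Hodd (N_exp HN wN) w1.
have iw := N_index2 HN wN w1.
have wsub : <[w]> \subset N by rewrite cycle_subG.
have genC : forall C : {group PGL2 p}, C \subset N -> #|N : C| = 2 -> C != <[w]>%G ->
    exists z, [/\ z \in N, z != 1, z \notin PSL2 p & C :=: <[z]>].
  move=> C CN iC nC; have [z [zN z1 Cz]] := N_gen2 HN CN iC.
  exists z; split => //; apply: others => //; apply: contra nC => /eqP zw.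
  by apply/eqP/val_inj; rewrite /= Cz zw.
split.
  move=> p1; exists <[w]>%G; split => //.
    by exists Ca0; split => //; apply: hs0; rewrite wP hm1 p1.
  move=> C CN iC nC; have [z [zN z1 zP Cz]] := genC C CN iC nC.
  have [Ca [zCa hs hn _]] := inv_cartan Hp Hodd (N_exp HN zN) z1.
  exists Ca; split; last by rewrite Cz.
  by apply: hn; rewrite hm1 p1 (negbTE zP).
move=> p3; exists <[w]>%G; split => //.
  by exists Ca0; split => //; apply: hn0; rewrite wP hm1 p3.
move=> C CN iC nC; have [z [zN z1 zP Cz]] := genC C CN iC nC.
have [Ca [zCa hs hn _]] := inv_cartan Hp Hodd (N_exp HN zN) z1.
exists Ca; split; last by rewrite Cz.
by apply: hs; rewrite hm1 p3 (negbTE zP).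
Qed.
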